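(* There is no bounded continuous function $w:\mathbb R^2\to\mathbb R^2$ for which there exists a constant $c>0$ such that \[\bigl|\langle x-y,w(x)-w(y)\rangle\bigr|>c\,\|w(x)-w(y)\|\] for every pair $x,y\in\mathbb R^2$ with $\|x-y\|>1$.
   Context: $\langle\cdot,\cdot\rangle$ and $\|\cdot\|$ denote the standard inner product and Euclidean norm on $\mathbb R^2$. *)

(* Defs.v *)
From Stdlib Require Import Reals.
From Coquelicot Require Import Coquelicot.
Open Scope R_scope.

Definition ip2 (u v : R * R) : R := fst u * fst v + snd u * snd v.
Definition norm2 (u : R * R) : R := sqrt (ip2 u u).
Definition sub2 (u v : R * R) : R * R := (fst u - fst v, snd u - snd v).

(* Main.v *)
Require Import Defs.
From Stdlib Require Import Reals Lra Psatz Classical.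
From Coquelicot Require Import Coquelicot.
Open Scope R_scope.

Definition add2 (a b : R * R) : R * R := (fst a + fst b, snd a + snd b).
Definition scal2 (k : R) (a : R * R) : R * R := (k * fst a, k * snd a).
Definition uu (t : R) : R * R := (cos t, sin t).
Definition FF (w : R * R -> R * R) x y := ip2 (sub2 x y) (sub2 (w x) (w y)).

Lemma ip2_self_nonneg a : 0 <= ip2 a a.
Proof. unfold ip2; nra. Qed.

Lemma norm2_nonneg a : 0 <= norm2 a.
Proof. apply sqrt_pos. Qed.

Lemma norm2_sq a : norm2 a * norm2 a = ip2 a a.
Proof. unfold norm2; apply sqrt_sqrt, ip2_self_nonneg. Qed.

Lemma sq_le x y : 0 <= y -> x * x <= y * y -> x <= y.
Proof. intros; nra. Qed.

Lemma CS a b : ip2 a b <= norm2 a * norm2 b.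
Proof.
  pose proof (norm2_sq a); pose proof (norm2_sq b).
  pose proof (norm2_nonneg a); pose proof (norm2_nonneg b).
  assert (ip2 a b * ip2 a b <= (norm2 a * norm2 b) * (norm2 a * norm2 b)).
  { replace ((norm2 a * norm2 b) * (norm2 a * norm2 b)) with
      ((norm2 a * norm2 a) * (norm2 b * norm2 b)) by ring.
    rewrite H, H0. destruct a as [a1 a2], b as [b1 b2]; unfold ip2; simpl.
    pose proof (pow2_ge_0 (a1*b2 - a2*b1)); nra. }
  apply sq_le; nra.
Qed.

Lemma tri a b : norm2 (add2 a b) <= norm2 a + norm2 b.
Proof.
  pose proof (norm2_nonneg a); pose proof (norm2_nonneg b).
  pose proof (norm2_nonneg (add2 a b)).
  apply sq_le; [lra|]. rewrite norm2_sq.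
  pose proof (CS a b). pose proof (norm2_sq a); pose proof (norm2_sq b).
  assert (ip2 (add2 a b) (add2 a b) = ip2 a a + 2 * ip2 a b + ip2 b b)
    by (unfold ip2, add2; simpl; ring).
  nra.
Qed.

Lemma norm2_sub_sym a b : norm2 (sub2 a b) = norm2 (sub2 b a).
Proof. unfold norm2, ip2, sub2; simpl; f_equal; ring. Qed.

Lemma norm_gt1 a : ip2 a a > 1 -> norm2 a > 1.
Proof. intro H. unfold norm2. rewrite <- sqrt_1. apply sqrt_lt_1_alt. lra. Qed.

Lemma cont_pair (f g : R -> R) t :
  continuity_pt f t -> continuity_pt g t -> continuous (fun s => (f s, g s)) t.
Proof.
  intros Hf Hg. apply continuity_pt_filterlim in Hf. apply continuity_pt_filterlim in Hg.
  apply (continuous_comp_2 f g (fun a b => (a, b))); auto.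
  apply (continuous_ext (fun x => x)). { intros [a b]; reflexivity. }
  apply continuous_id.
Qed.

Lemma cont_fst (G : R -> R * R) t : continuous G t -> continuity_pt (fun s => fst (G s)) t.
Proof.
  intro H. apply continuity_pt_filterlim.
  apply (continuous_comp G fst). exact H. destruct (G t). apply continuous_fst.
Qed.

Lemma cont_snd (G : R -> R * R) t : continuous G t -> continuity_pt (fun s => snd (G s)) t.
Proof.
  intro H. apply continuity_pt_filterlim.
  apply (continuous_comp G snd). exact H. destruct (G t). apply continuous_snd.
Qed.

Lemma path_sign w (Hw : forall x, continuous w x)
  (Hnz : forall x y, norm2 (sub2 x y) > 1 -> FF w x y <> 0)
  (X Y : R -> R * R) (HX : forall t, continuous X t) (HY : forall t, continuous Y t)
  (Hd : forall t, 0 <= t <= 1 -> norm2 (sub2 (X t) (Y t)) > 1) :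
  (0 < FF w (X 0) (Y 0) -> 0 < FF w (X 1) (Y 1)) /\
  (FF w (X 0) (Y 0) < 0 -> FF w (X 1) (Y 1) < 0).
Proof.
  set (h := fun t => FF w (X t) (Y t)).
  assert (Hc : continuity h).
  { intro t. unfold h, FF, ip2, sub2; simpl.
    assert (HWX : forall t, continuous (fun s => w (X s)) t).
    { intro s. apply (continuous_comp X w). apply HX. apply Hw. }
    assert (HWY : forall t, continuous (fun s => w (Y s)) t).
    { intro s. apply (continuous_comp Y w). apply HY. apply Hw. }
    apply continuity_pt_plus; apply continuity_pt_mult; apply continuity_pt_minus;
      first [ apply (cont_fst _ _ (HX t)) | apply (cont_fst _ _ (HY t))
            | apply (cont_snd _ _ (HX t)) | apply (cont_snd _ _ (HY t))
            | apply (cont_fst _ _ (HWX t)) | apply (cont_fst _ _ (HWY t))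
            | apply (cont_snd _ _ (HWX t)) | apply (cont_snd _ _ (HWY t)) ]. }
  assert (H01 : h 1 <> 0) by (apply Hnz, Hd; lra).
  split; intro H0.
  - destruct (Rlt_or_le 0 (h 1)) as [|Hle]; [exact H|].
    exfalso.
    destruct (IVT (fun t => - h t) 0 1) as [z [Hz Hz0]].
    + apply continuity_opp, Hc.
    + lra.
    + unfold h in *; lra.
    + assert (h 1 < 0) by lra. lra.
    + apply (Hnz (X z) (Y z)). apply Hd; lra. unfold h in Hz0. lra.
  - destruct (Rlt_or_le (h 1) 0) as [|Hle]; [exact H|].
    exfalso.
    destruct (IVT h 0 1) as [z [Hz Hz0]].
    + exact Hc.
    + lra.
    + exact H0.
    + assert (0 < h 1) by lra. lra.
    + apply (Hnz (X z) (Y z)). apply Hd; lra. exact Hz0.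
Qed.

Lemma ip2_add_r u a b : ip2 u (add2 a b) = ip2 u a + ip2 u b.
Proof. unfold ip2, add2; simpl; ring. Qed.

Lemma ip2_sub_r u a b : ip2 u (sub2 a b) = ip2 u a - ip2 u b.
Proof. unfold ip2, sub2; simpl; ring. Qed.

Lemma norm_uu t : norm2 (uu t) = 1.
Proof.
  unfold norm2, ip2, uu; simpl. pose proof (sin2_cos2 t). unfold Rsqr in H.
  replace (cos t * cos t + sin t * sin t) with 1 by lra. apply sqrt_1.
Qed.

Lemma norm_zero2 q : norm2 (sub2 q q) = 0.
Proof. unfold norm2, ip2, sub2; simpl. replace (_ + _) with 0 by ring. apply sqrt_0. Qed.

Section Main.
Variable w : R * R -> R * R.
Variable c : R.
Hypothesis Hc0 : 0 < c.
Hypothesis Hc1 : c <= 1.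
Hypothesis SP : forall t y e, norm2 e <= 1/4 ->
  FF w (add2 y (add2 (scal2 2 (uu t)) e)) y >
  c * norm2 (sub2 (w (add2 y (add2 (scal2 2 (uu t)) e))) (w y)).

Lemma chain t e a (He : norm2 e <= c / 4) : forall n,
  norm2 (sub2 (w (add2 a (scal2 (INR n) (add2 (scal2 2 (uu t)) e)))) (w a)) <=
  (3 / c) * ip2 (uu t) (sub2 (w (add2 a (scal2 (INR n) (add2 (scal2 2 (uu t)) e)))) (w a)).
Proof.
  set (v := add2 (scal2 2 (uu t)) e).
  induction n as [|n IH].
  - replace (add2 a (scal2 (INR 0) v)) with a.
    2:{ destruct a; unfold add2, scal2; simpl; f_equal; ring. }
    rewrite norm_zero2. unfold ip2, sub2; simpl. lra.
  - set (Q := add2 a (scal2 (INR n) v)) in *.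
    replace (add2 a (scal2 (INR (S n)) v)) with (add2 Q v).
    2:{ unfold Q; rewrite S_INR; destruct a; unfold add2, scal2; simpl; f_equal; ring. }
    set (d := sub2 (w (add2 Q v)) (w Q)).
    assert (Hs : c * norm2 d < 2 * ip2 (uu t) d + ip2 e d).
    { pose proof (SP t Q e ltac:(lra)) as H. fold v in H. unfold FF in H. fold d in H.
      replace (sub2 (add2 Q v) Q) with v in H.
      2:{ unfold v; destruct Q; unfold add2, sub2, scal2; simpl; f_equal; ring. }
      replace (ip2 v d) with (2 * ip2 (uu t) d + ip2 e d) in H.
      2:{ unfold v, ip2, add2, scal2; simpl; ring. }
      lra. }
    pose proof (CS e d). pose proof (norm2_nonneg d). pose proof (norm2_nonneg e).
    assert (Hd : norm2 d <= (3 / c) * ip2 (uu t) d).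
    { assert (ip2 e d <= c / 4 * norm2 d) by nra.
      assert (Hk : 3 / c * c = 3) by (field; lra).
      assert (0 < 3 / c) by (apply Rdiv_lt_0_compat; lra).
      nra. }
    replace (sub2 (w (add2 Q v)) (w a)) with (add2 d (sub2 (w Q) (w a))).
    2:{ unfold d, add2, sub2; simpl; f_equal; ring. }
    rewrite ip2_add_r. pose proof (tri d (sub2 (w Q) (w a))). lra.
Qed.

Variable M : R.
Hypothesis HM : forall x, norm2 (w x) <= M.

Definition near t d p := forall z, ip2 (uu t) (w z) < ip2 (uu t) (w p) + d.

Lemma near_sup t d : 0 < d -> exists p, near t d p.
Proof.
  intro Hd.
  set (E := fun r => exists z, r = ip2 (uu t) (w z)).
  assert (HB : bound E).
  { exists M. intros r [z ->]. pose proof (CS (uu t) (w z)). rewrite norm_uu in H.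
    pose proof (HM z). lra. }
  destruct (completeness E HB) as [L [HL1 HL2]].
  { exists (ip2 (uu t) (w (0,0))). exists (0,0). reflexivity. }
  destruct (classic (exists p, ip2 (uu t) (w p) > L - d)) as [[p Hp]|Hn].
  - exists p. intro z. assert (ip2 (uu t) (w z) <= L) by (apply HL1; exists z; reflexivity). lra.
  - exfalso. assert (L <= L - d); [|lra].
    apply HL2. intros r [z ->]. apply Rnot_lt_le. intro Hlt. apply Hn. exists z. lra.
Qed.

Lemma claim t d p z : 0 < d -> near t d p ->
  norm2 (sub2 (w z) (w p)) <= (3 / c) * (ip2 (uu t) (w p) - ip2 (uu t) (w z)) + (6 / c) * d.
Proof.
  intros Hd Hp.
  set (r := 4 * norm2 (sub2 p z) / c + 1).
  assert (Hr : 0 < r).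
  { unfold r. pose proof (norm2_nonneg (sub2 p z)).
    assert (0 <= 4 * norm2 (sub2 p z) / c) by (apply Rdiv_le_0_compat; lra). lra. }
  destruct (archimed_cor1 (/ r) ltac:(apply Rinv_0_lt_compat; lra)) as [N [HN HN0]].
  assert (Hk : 0 < INR N) by (apply lt_0_INR; exact HN0).
  set (k := INR N) in *.
  assert (Hkr : r < k).
  { apply Rinv_lt_cancel; [lra|]. exact HN. }
  set (e := scal2 (/ k) (sub2 p z)).
  assert (He : norm2 e <= c / 4).
  { pose proof (norm2_nonneg e). apply sq_le; [lra|]. rewrite norm2_sq.
    assert (ip2 e e = / k * / k * (norm2 (sub2 p z) * norm2 (sub2 p z))).
    { rewrite norm2_sq. unfold e, ip2, scal2; simpl; ring. }
    rewrite H0. pose proof (norm2_nonneg (sub2 p z)) as Hn.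
    assert (norm2 (sub2 p z) < c / 4 * k).
    { unfold r in Hkr. assert (4 * norm2 (sub2 p z) / c < k) by lra.
      apply (Rmult_lt_compat_r (c/4)) in H1; [|lra].
      replace (4 * norm2 (sub2 p z) / c * (c / 4)) with (norm2 (sub2 p z)) in H1 by (field; lra).
      lra. }
    assert (norm2 (sub2 p z) * / k < c / 4).
    { apply (Rmult_lt_reg_r k); [lra|]. replace (norm2 (sub2 p z) * / k * k) with (norm2 (sub2 p z)) by (field; lra). lra. }
    assert (0 <= norm2 (sub2 p z) * / k) by (apply Rmult_le_pos; [lra| left; apply Rinv_0_lt_compat; lra]).
    nra. }
  assert (He0 : norm2 (0,0) <= c / 4).
  { unfold norm2, ip2; simpl. replace (0*0+0*0) with 0 by ring. rewrite sqrt_0. lra. }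
  pose proof (chain t e z He N) as C1. fold k in C1.
  pose proof (chain t (0,0) p He0 N) as C2. fold k in C2.
  replace (add2 z (scal2 k (add2 (scal2 2 (uu t)) e))) with
      (add2 p (scal2 k (add2 (scal2 2 (uu t)) (0,0)))) in C1.
  2:{ unfold e, add2, scal2, sub2; simpl; f_equal; field; lra. }
  set (y := add2 p (scal2 k (add2 (scal2 2 (uu t)) (0, 0)))) in *.
  rewrite ip2_sub_r in C1, C2.
  pose proof (Hp y).
  assert (0 < 3 / c) by (apply Rdiv_lt_0_compat; lra).
  replace (sub2 (w z) (w p)) with (add2 (sub2 (w y) (w p)) (sub2 (w z) (w y))).
  2:{ unfold add2, sub2; simpl; f_equal; ring. }
  pose proof (tri (sub2 (w y) (w p)) (sub2 (w z) (w y))) as T.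
  rewrite (norm2_sub_sym (w z) (w y)) in T.
  assert (6 / c = 2 * (3 / c)) by (field; lra).
  nra.
Qed.

Lemma dir_close a b : Rabs (a - b) <= PI / 2 -> norm2 (sub2 (uu a) (uu b)) <= Rabs (a - b).
Proof.
  intro Hab. apply sq_le; [apply Rabs_pos|]. rewrite norm2_sq.
  assert (E : ip2 (sub2 (uu a) (uu b)) (sub2 (uu a) (uu b)) = 2 - 2 * cos (a - b)).
  { rewrite cos_minus. pose proof (sin2_cos2 a); pose proof (sin2_cos2 b).
    unfold Rsqr in *. unfold ip2, sub2, uu; simpl. lra. }
  rewrite E.
  assert (Hb : - PI / 2 <= a - b <= PI / 2).
  { apply Rabs_le_between in Hab. lra. }
  destruct Hb as [Hb1 Hb2].
  pose proof (cos_bound (a - b) 0 Hb1 Hb2) as [Hc _].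
  unfold cos_approx, cos_term in Hc. simpl in Hc.
  replace (Rabs (a - b) * Rabs (a - b)) with ((a - b) * (a - b)).
  2:{ rewrite <- Rabs_mult. symmetry. apply Rabs_pos_eq. pose proof (pow2_ge_0 (a - b)). nra. }
  lra.
Qed.

Lemma lemA t t' d p p' : 0 < d -> norm2 (sub2 (uu t) (uu t')) <= c / 3 ->
  near t d p -> near t' d p' -> norm2 (sub2 (w p) (w p')) <= (12 / c) * d.
Proof.
  intros Hd Hu Hp Hp'.
  pose proof (claim t d p p' Hd Hp) as C1.
  pose proof (claim t' d p' p Hd Hp') as C2.
  rewrite norm2_sub_sym in C1.
  pose proof (CS (sub2 (uu t) (uu t')) (sub2 (w p) (w p'))) as Cs.
  assert (Eq : ip2 (sub2 (uu t) (uu t')) (sub2 (w p) (w p')) =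
     (ip2 (uu t) (w p) - ip2 (uu t) (w p')) + (ip2 (uu t') (w p') - ip2 (uu t') (w p))).
  { unfold ip2, sub2; simpl; ring. }
  pose proof (norm2_nonneg (sub2 (w p) (w p'))).
  pose proof (norm2_nonneg (sub2 (uu t) (uu t'))).
  assert (Hk : 3 / c * c = 3) by (field; lra).
  assert (E6 : 6 / c = 2 * (3 / c)) by (field; lra).
  assert (E12 : 12 / c = 4 * (3 / c)) by (field; lra).
  assert (0 < 3 / c) by (apply Rdiv_lt_0_compat; lra).
  set (K := 3 / c) in *.
  set (D := norm2 (sub2 (w p) (w p'))) in *.
  set (X := ip2 (sub2 (uu t) (uu t')) (sub2 (w p) (w p'))) in *.
  assert (X <= c / 3 * D) by nra.
  assert (K * X <= D) by (assert (K * X <= K * (c / 3 * D)) by nra; nra).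
  rewrite E12. rewrite E6 in C1, C2. nra.
Qed.

Lemma ind_dirs N d : 0 < d -> 0 < INR N -> PI / INR N <= c / 3 ->
  forall k p0 pk, near 0 d p0 -> near (INR k * (PI / INR N)) d pk ->
  norm2 (sub2 (w p0) (w pk)) <= INR (S k) * ((12 / c) * d).
Proof.
  intros Hd HN Hh.
  assert (Hh0 : 0 < PI / INR N) by (apply Rdiv_lt_0_compat; [apply PI_RGT_0|lra]).
  assert (PI / 2 > 1) by exact PI2_1.
  induction k as [|k IH]; intros p0 pk H0 Hk.
  - replace (INR 0 * (PI / INR N)) with 0 in Hk by (simpl; ring).
    rewrite Rmult_1_l. apply (lemA 0 0 d); auto.
    rewrite norm_zero2. lra.
  - destruct (near_sup (INR k * (PI / INR N)) d Hd) as [q Hq].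
    pose proof (IH p0 q H0 Hq) as IHq.
    assert (norm2 (sub2 (w q) (w pk)) <= (12 / c) * d).
    { apply (lemA (INR k * (PI / INR N)) (INR (S k) * (PI / INR N)) d); auto.
      rewrite S_INR.
      eapply Rle_trans. apply dir_close.
      all: replace (INR k * (PI / INR N) - (INR k + 1) * (PI / INR N)) with (- (PI / INR N)) by ring;
        rewrite Rabs_Ropp, Rabs_pos_eq; lra. }
    replace (sub2 (w p0) (w pk)) with (add2 (sub2 (w p0) (w q)) (sub2 (w q) (w pk))).
    2:{ unfold add2, sub2; simpl; f_equal; ring. }
    pose proof (tri (sub2 (w p0) (w q)) (sub2 (w q) (w pk))).
    rewrite (S_INR (S k)). lra.
Qed.

Lemma fst_le x : ip2 (uu 0) x <= norm2 x.
Proof. pose proof (CS (uu 0) x). rewrite norm_uu in H. lra. Qed.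

Lemma main_alg : False.
Proof.
  assert (Hpi : 0 < PI) by apply PI_RGT_0.
  destruct (archimed_cor1 (c / (3 * PI)) ltac:(apply Rdiv_lt_0_compat; lra)) as [N [HN HN0]].
  assert (HNp : 0 < INR N) by (apply lt_0_INR; exact HN0).
  assert (Hh : PI / INR N <= c / 3).
  { assert (PI / INR N = PI * / INR N) by (unfold Rdiv; ring).
    assert (PI * / INR N < PI * (c / (3 * PI))) by (apply Rmult_lt_compat_l; lra).
    replace (PI * (c / (3 * PI))) with (c / 3) in H0 by (field; lra). lra. }
  set (K := (3 / c) * (INR (S N) * (12 / c) + 1) + 6 / c).
  assert (HK : 0 < K).
  { unfold K. assert (0 < 3 / c) by (apply Rdiv_lt_0_compat; lra).
    assert (0 < 6 / c) by (apply Rdiv_lt_0_compat; lra).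
    assert (0 < 12 / c) by (apply Rdiv_lt_0_compat; lra).
    pose proof (pos_INR (S N)). nra. }
  assert (Hall : forall d, 0 < d -> exists p0, forall z, norm2 (sub2 (w z) (w p0)) <= K * d).
  { intros d Hd.
    destruct (near_sup 0 d Hd) as [p0 Hp0].
    destruct (near_sup (INR N * (PI / INR N)) d Hd) as [q Hq].
    pose proof (ind_dirs N d Hd HNp Hh N p0 q Hp0 Hq) as Hpq.
    replace (INR N * (PI / INR N)) with PI in Hq by (field; lra).
    exists p0. intro z.
    pose proof (claim 0 d p0 z Hd Hp0) as Cl.
    pose proof (Hq z) as Hqz.
    pose proof (fst_le (sub2 (w p0) (w q))) as F1.
    assert (ip2 (uu 0) (w p0) - ip2 (uu 0) (w z) <= INR (S N) * ((12 / c) * d) + d).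
    { unfold ip2, uu, sub2 in *; simpl in *. rewrite cos_PI, sin_PI in Hqz.
      rewrite cos_0, sin_0 in *. lra. }
    assert (0 < 3 / c) by (apply Rdiv_lt_0_compat; lra).
    unfold K. nra. }
  set (z1 := (2, 0) : R * R). set (z2 := (0, 0) : R * R).
  assert (HD : norm2 (sub2 (w z1) (w z2)) = 0).
  { pose proof (norm2_nonneg (sub2 (w z1) (w z2))).
    destruct (Rle_lt_or_eq_dec 0 _ H) as [Hlt|]; [|auto].
    exfalso.
    destruct (Hall (norm2 (sub2 (w z1) (w z2)) / (4 * K)) ltac:(apply Rdiv_lt_0_compat; lra)) as [p0 Hp0].
    pose proof (Hp0 z1) as A1. pose proof (Hp0 z2) as A2.
    assert (Ez : sub2 (w z1) (w z2) = add2 (sub2 (w z1) (w p0)) (sub2 (w p0) (w z2))).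
    { unfold add2, sub2; simpl; f_equal; ring. }
    pose proof (tri (sub2 (w z1) (w p0)) (sub2 (w p0) (w z2))) as T.
    rewrite <- Ez in T.
    rewrite (norm2_sub_sym (w p0) (w z2)) in T.
    assert (K * (norm2 (sub2 (w z1) (w z2)) / (4 * K)) = norm2 (sub2 (w z1) (w z2)) / 4) by (field; lra).
    lra. }
  pose proof (SP 0 z2 (0,0)) as S.
  replace (add2 z2 (add2 (scal2 2 (uu 0)) (0, 0))) with z1 in S.
  2:{ unfold z1, z2, add2, scal2, uu; simpl. rewrite cos_0, sin_0. f_equal; ring. }
  rewrite HD in S.
  assert (HD2 : sub2 (w z1) (w z2) = (0,0)).
  { unfold norm2 in HD. apply sqrt_eq_0 in HD; [|apply ip2_self_nonneg].
    destruct (sub2 (w z1) (w z2)) as [a b]. unfold ip2 in HD; simpl in HD.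
    assert (a = 0) by nra. assert (b = 0) by nra. subst; reflexivity. }
  unfold FF in S. rewrite HD2 in S. unfold ip2 in S; simpl in S.
  assert (norm2 (0,0) <= 1/4).
  { unfold norm2, ip2; simpl. replace (0*0+0*0) with 0 by ring. rewrite sqrt_0. lra. }
  specialize (S H). lra.
Qed.

End Main.

Lemma path_sign' w (Hw : forall x, continuous w x)
  (Hnz : forall x y, norm2 (sub2 x y) > 1 -> FF w x y <> 0)
  (X Y : R -> R * R) x0 y0 x1 y1
  (HX : forall t, continuous X t) (HY : forall t, continuous Y t)
  (Hd : forall t, 0 <= t <= 1 -> norm2 (sub2 (X t) (Y t)) > 1)
  (E0 : X 0 = x0) (E0' : Y 0 = y0) (E1 : X 1 = x1) (E1' : Y 1 = y1) :
  (0 < FF w x0 y0 -> 0 < FF w x1 y1) /\ (FF w x0 y0 < 0 -> FF w x1 y1 < 0).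
Proof.
  subst. apply path_sign; auto.
Qed.

Lemma cont_const_pair (y : R * R) t : continuous (fun _ : R => y) t.
Proof. apply continuous_const. Qed.

Lemma transfer w (Hw : forall x, continuous w x)
  (Hnz : forall x y, norm2 (sub2 x y) > 1 -> FF w x y <> 0) t y e :
  norm2 e <= 1/4 ->
  (0 < FF w (2,0) (0,0) -> 0 < FF w (add2 y (add2 (scal2 2 (uu t)) e)) y) /\
  (FF w (2,0) (0,0) < 0 -> FF w (add2 y (add2 (scal2 2 (uu t)) e)) y < 0).
Proof.
  intro He.
  destruct (path_sign' w Hw Hnz (fun s => (2 + s * fst y, s * snd y)) (fun s => (s * fst y, s * snd y))
     (2,0) (0,0) (fst y + 2, snd y) y) as [A1 A2].
  - intro s. apply cont_pair; reg.
  - intro s. apply cont_pair; reg.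
  - intros s _. apply norm_gt1. unfold ip2, sub2; simpl. ring_simplify. lra.
  - f_equal; ring.
  - f_equal; ring.
  - f_equal; ring.
  - destruct y; simpl; f_equal; ring.
  - destruct (path_sign' w Hw Hnz (fun s => (fst y + 2 * cos (s * t), snd y + 2 * sin (s * t)))
       (fun _ => y) (fst y + 2, snd y) y (fst y + 2 * cos t, snd y + 2 * sin t) y) as [B1 B2].
    + intro s. apply cont_pair; reg.
    + intro s. apply cont_const_pair.
    + intros s _. apply norm_gt1. unfold ip2, sub2; simpl.
      pose proof (sin2_cos2 (s * t)). unfold Rsqr in H. nra.
    + rewrite Rmult_0_l, cos_0, sin_0. f_equal; ring.
    + reflexivity.
    + rewrite Rmult_1_l. reflexivity.
    + reflexivity.
    + destruct (path_sign' w Hw Hnz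
         (fun s => (fst y + 2 * cos t + s * fst e, snd y + 2 * sin t + s * snd e))
         (fun _ => y) (fst y + 2 * cos t, snd y + 2 * sin t) y
         (add2 y (add2 (scal2 2 (uu t)) e)) y) as [C1 C2].
      * intro s. apply cont_pair; reg.
      * intro s. apply cont_const_pair.
      * intros s Hs. apply norm_gt1. unfold ip2, sub2; simpl.
        assert (Hee : ip2 e e <= 1/16).
        { rewrite <- norm2_sq. pose proof (norm2_nonneg e). nra. }
        destruct e as [e1 e2]. unfold ip2 in Hee; simpl in *.
        pose proof (sin2_cos2 t). unfold Rsqr in H.
        set (x := cos t * e1 + sin t * e2).
        assert (x * x <= 1/16).
        { assert (x * x <= (cos t * cos t + sin t * sin t) * (e1 * e1 + e2 * e2)).
          { unfold x. pose proof (pow2_ge_0 (cos t * e2 - sin t * e1)). nra. }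
          nra. }
        assert (-1/4 <= x <= 1/4) by nra.
        replace ((fst y + 2 * cos t + s * e1 - fst y) * (fst y + 2 * cos t + s * e1 - fst y) +
          (snd y + 2 * sin t + s * e2 - snd y) * (snd y + 2 * sin t + s * e2 - snd y))
          with (4 * (cos t * cos t + sin t * sin t) + 4 * s * x + s * s * (e1 * e1 + e2 * e2))
          by (unfold x; ring).
        pose proof (pow2_ge_0 e1); pose proof (pow2_ge_0 e2). nra.
      * f_equal; ring.
      * reflexivity.
      * unfold add2, scal2, uu; simpl. f_equal; ring.
      * reflexivity.
      * split; intro Hs; auto.
Qed.

Theorem theorem4 :
  ~ exists w : R * R -> R * R,
      (forall x, continuous w x) /\
      (exists M : R, forall x, norm2 (w x) <= M) /\
      (exists c : R, c > 0 /\
         forall x y : R * R, norm2 (sub2 x y) > 1 ->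
           Rabs (ip2 (sub2 x y) (sub2 (w x) (w y))) > c * norm2 (sub2 (w x) (w y))).
Proof.
  intros [w [Hw [[M HM] [c0 [Hc0 H]]]]].
  set (c := Rmin c0 1).
  assert (Hc : 0 < c) by (unfold c; apply Rmin_glb_lt; lra).
  assert (Hc1 : c <= 1) by (unfold c; apply Rmin_r).
  assert (H' : forall x y, norm2 (sub2 x y) > 1 ->
            Rabs (FF w x y) > c * norm2 (sub2 (w x) (w y))).
  { intros x y Hxy. pose proof (H x y Hxy). pose proof (norm2_nonneg (sub2 (w x) (w y))).
    assert (c <= c0) by (unfold c; apply Rmin_l). unfold FF. nra. }
  assert (Hnz : forall x y, norm2 (sub2 x y) > 1 -> FF w x y <> 0).
  { intros x y Hxy E. pose proof (H' x y Hxy). rewrite E, Rabs_R0 in H0.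
    pose proof (norm2_nonneg (sub2 (w x) (w y))). nra. }
  assert (Href : norm2 (sub2 (2,0) (0,0)) > 1).
  { apply norm_gt1. unfold ip2, sub2; simpl. lra. }
  pose proof (Hnz _ _ Href) as Hr.
  destruct (Rdichotomy _ _ Hr) as [Hneg|Hpos].
  - set (w' := fun x => (- fst (w x), - snd (w x))).
    apply (main_alg w' c Hc Hc1) with (M := M).
    + intros t y e He. destruct (transfer w Hw Hnz t y e He) as [_ T].
      specialize (T Hneg).
      set (x := add2 y (add2 (scal2 2 (uu t)) e)) in *.
      assert (Hxy : norm2 (sub2 x y) > 1).
      { unfold x. apply norm_gt1. unfold ip2, sub2, add2, scal2, uu; simpl.
        pose proof (sin2_cos2 t). unfold Rsqr in H0.
        assert (Hee : ip2 e e <= 1/16).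
        { rewrite <- norm2_sq. pose proof (norm2_nonneg e). nra. }
        destruct e as [e1 e2]. unfold ip2 in Hee; simpl in *.
        set (z := cos t * e1 + sin t * e2).
        assert (z * z <= 1/16).
        { assert (z * z <= (cos t * cos t + sin t * sin t) * (e1 * e1 + e2 * e2)).
          { unfold z. pose proof (pow2_ge_0 (cos t * e2 - sin t * e1)). nra. }
          nra. }
        assert (-1/4 <= z <= 1/4) by nra.
        replace ((fst y + (2 * cos t + e1) - fst y) * (fst y + (2 * cos t + e1) - fst y) +
          (snd y + (2 * sin t + e2) - snd y) * (snd y + (2 * sin t + e2) - snd y))
          with (4 * (cos t * cos t + sin t * sin t) + 4 * z + (e1 * e1 + e2 * e2))
          by (unfold z; ring).
        pose proof (pow2_ge_0 e1); pose proof (pow2_ge_0 e2). nra. }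
      pose proof (H' x y Hxy) as Ha.
      rewrite Rabs_left in Ha by exact T.
      assert (E1 : FF w' x y = - FF w x y) by (unfold FF, w', ip2, sub2; simpl; ring).
      assert (E2 : norm2 (sub2 (w' x) (w' y)) = norm2 (sub2 (w x) (w y))).
      { unfold w', norm2, ip2, sub2; simpl. f_equal. ring. }
      rewrite E1, E2. lra.
    + intro x. replace (norm2 (w' x)) with (norm2 (w x)). apply HM.
      unfold w', norm2, ip2; simpl. f_equal; ring.
  - apply (main_alg w c Hc Hc1) with (M := M).
    + intros t y e He. destruct (transfer w Hw Hnz t y e He) as [T _].
      specialize (T Hpos).
      set (x := add2 y (add2 (scal2 2 (uu t)) e)) in *.
      assert (Hxy : norm2 (sub2 x y) > 1).
      { unfold x. apply norm_gt1. unfold ip2, sub2, add2, scal2, uu; simpl.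
        pose proof (sin2_cos2 t). unfold Rsqr in H0.
        assert (Hee : ip2 e e <= 1/16).
        { rewrite <- norm2_sq. pose proof (norm2_nonneg e). nra. }
        destruct e as [e1 e2]. unfold ip2 in Hee; simpl in *.
        set (z := cos t * e1 + sin t * e2).
        assert (z * z <= 1/16).
        { assert (z * z <= (cos t * cos t + sin t * sin t) * (e1 * e1 + e2 * e2)).
          { unfold z. pose proof (pow2_ge_0 (cos t * e2 - sin t * e1)). nra. }
          nra. }
        assert (-1/4 <= z <= 1/4) by nra.
        replace ((fst y + (2 * cos t + e1) - fst y) * (fst y + (2 * cos t + e1) - fst y) +
          (snd y + (2 * sin t + e2) - snd y) * (snd y + (2 * sin t + e2) - snd y))
          with (4 * (cos t * cos t + sin t * sin t) + 4 * z + (e1 * e1 + e2 * e2))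
          by (unfold z; ring).
        pose proof (pow2_ge_0 e1); pose proof (pow2_ge_0 e2). nra. }
      pose proof (H' x y Hxy) as Ha.
      rewrite Rabs_pos_eq in Ha by lra. exact Ha.
    + exact HM.
Qed.
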